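(* Let $(X_n)$ be a finite Markov chain with transition matrix $P$ in which state $k$ is absorbing and, from every state, $k$ is reachable; all states other than $k$ are transient. Let $F^{k}=(I-P_{\mathcal T\mathcal T})^{-1}$, $\mathcal T$ the set of states other than $k$, be its fundamental matrix. Let $s,m,t$ be states different from $k$ with $s\neq t$, $m\neq t$ and $F^k_{st}>0$. Then the avoidance fundamental matrix satisfies $$F_{sm}^{\{t,\overline{k}\}}=F_{mt}^k\left(\frac{F_{sm}^k}{F_{st}^k}-\frac{F_{tm}^k}{F_{tt}^k}\right).$$
   Context: For a finite Markov chain with transition matrix $P$ and a set $\mathcal A$ of states made absorbing (their rows replaced by unit rows), with transient set $\mathcal T$ (complement of $\mathcal A$) from which $\mathcal A$ is reachable, the fundamental matrix is $F^{\mathcal A}=(I-P_{\mathcal T\mathcal T})^{-1}$; $F^{\mathcal A}_{sm}$ is the expected number of visits to $m$ starting from $s$ before absorption. For $t\in\mathcal A$, $Q_s^{\{t,\overline{\mathcal A\setminus\{t\}}\}}$ denotes the probability that the chain started at $s$ is absorbed at $t$ (i.e. the first absorbing state hit is $t$). For two states $t,k$, the avoidance fundamental matrix is defined by $F^{\{t,\overline{k}\}}_{sm}=F^{\{t,k\}}_{sm}\,\dfrac{Q_m^{\{t,\overline{k}\}}}{Q_s^{\{t,\overline{k}\}}}$, where $F^{\{t,k\}}$ is the fundamental matrix with absorbing set $\{t,k\}$ and $Q^{\{t,\overline k\}}_x$ is the probability that, with absorbing set $\{t,k\}$, the chain from $x$ is absorbed at $t$. *)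

(* Defs.v *)
From HB Require Import structures.
From mathcomp Require Import all_boot all_order all_algebra.
Set Implicit Arguments. Unset Strict Implicit. Unset Printing Implicit Defensive.
Import Order.TTheory GRing.Theory Num.Theory.
Local Open Scope ring_scope.

Section Markov.
Variables (R : realFieldType) (n : nat).

Definition stochastic (P : 'M[R]_n) : Prop :=
  (forall i j, 0 <= P i j) /\ (forall i, \sum_j P i j = 1).

Definition step (P : 'M[R]_n) : rel 'I_n := fun i j => 0 < P i j.

Definition subTT (P : 'M[R]_n) (A : {set 'I_n}) : 'M[R]_(#|~: A|) :=
  \matrix_(i, j) P (enum_val i) (enum_val j).

Definition fundmx (P : 'M[R]_n) (A : {set 'I_n}) : 'M[R]_(#|~: A|) :=
  invmx (1%:M - subTT P A).

(* the entry F^A_{sm} for states s, m of T (0 if s or m not transient) *)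
Definition Fent (P : 'M[R]_n) (A : {set 'I_n}) (s m : 'I_n) : R :=
  match [pick i : 'I_#|~: A| | enum_val i == s],
        [pick j : 'I_#|~: A| | enum_val j == m] with
  | Some i, Some j => fundmx P A i j
  | _, _ => 0
  end.

(* absorption probability Q_s^{t, bar(A\{t})}: probability that the chain
   started at s is first absorbed in t.  For transient s this is the
   standard formula (F^A R)_{st} = sum_{m in T} F^A_{sm} P_{mt};
   for s in A it is [s == t]. *)
Definition Qabs (P : 'M[R]_n) (A : {set 'I_n}) (t s : 'I_n) : R :=
  if s \in A then (s == t)%:R
  else \sum_(m | m \notin A) Fent P A s m * P m t.

Definition Favoid (P : 'M[R]_n) (t k s m : 'I_n) : R :=
  Fent P [set t; k] s m * Qabs P [set t; k] t m / Qabs P [set t; k] t s.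

End Markov.

(* Main.v *)
Require Import Defs.
From HB Require Import structures.
From mathcomp Require Import all_boot all_order all_algebra.
From mathcomp Require Import ring lra.
Set Implicit Arguments. Unset Strict Implicit. Unset Printing Implicit Defensive.
Import Order.TTheory GRing.Theory Num.Theory.
Local Open Scope ring_scope.

Section H.
Variables (R : realFieldType) (n : nat) (P : 'M[R]_n).

Lemma Fent_val (A : {set 'I_n}) s m i j :
  enum_val i = s -> enum_val j = m -> Fent P A s m = fundmx P A i j.
Proof.
move=> Hi Hj; rewrite /Fent.
case: pickP => [i' /eqP Hi'|H]; last by move: (H i); rewrite Hi eqxx.
case: pickP => [j' /eqP Hj'|H]; last by move: (H j); rewrite Hj eqxx.
have -> : i' = i by apply: enum_val_inj; rewrite Hi Hi'.
have -> : j' = j by apply: enum_val_inj; rewrite Hj Hj'.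
by [].
Qed.

Lemma Fent_outl (A : {set 'I_n}) s m : s \in A -> Fent P A s m = 0.
Proof.
move=> hs; rewrite /Fent; case: pickP => [i /eqP Hi|//].
by have := enum_valP i; rewrite Hi inE hs.
Qed.

Lemma Fent_outr (A : {set 'I_n}) s m : m \in A -> Fent P A s m = 0.
Proof.
move=> hs; rewrite /Fent; case: pickP => [i _|//]; case: pickP => [j /eqP Hj|//].
by have := enum_valP j; rewrite Hj inE hs.
Qed.

Lemma sum_ev (A : {set 'I_n}) (u : 'I_n -> R) :
  \sum_(i < #|~: A|) u (enum_val i) = \sum_z u z * (z \notin A)%:R.
Proof.
have -> : \sum_z u z * (z \notin A)%:R = \sum_(z in ~: A) u z.
  rewrite [RHS]big_mkcond /=.
  by apply: eq_bigr => z _; rewrite inE; case: (z \in A); rewrite ?mulr0 ?mulr1.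
by rewrite (big_enum_val (A := pred_of_set (~: A))).
Qed.

Lemma sum_ev0 (A : {set 'I_n}) (u : 'I_n -> R) :
  (forall z, z \in A -> u z = 0) ->
  \sum_(i < #|~: A|) u (enum_val i) = \sum_z u z.
Proof.
move=> H; rewrite sum_ev; apply: eq_bigr => z _.
by case: (boolP (z \in A)) => hz; [rewrite H // mul0r | rewrite mulr1].
Qed.

Lemma ev_of (A : {set 'I_n}) x : x \notin A -> {i : 'I_#|~: A| | enum_val i = x}.
Proof.
move=> hx; have hx' : x \in ~: A by rewrite inE.
exists (enum_rank_in hx' x); exact: enum_rankK_in.
Qed.

Lemma fund_left (A : {set 'I_n}) x y :
  (1%:M - subTT P A) \in unitmx -> x \notin A -> y \notin A ->
  \sum_z ((x == z)%:R - P x z) * Fent P A z y = (x == y)%:R.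
Proof.
move=> U hx hy; case: (ev_of hx) => i Hi; case: (ev_of hy) => j Hj.
have := mulmxV U; move/matrixP => /(_ i j); rewrite !mxE.
have -> : (i == j) = (x == y) by rewrite -Hi -Hj (inj_eq enum_val_inj).
move=> <-.
rewrite -(sum_ev0 (A := A) (u := fun z => ((x == z)%:R - P x z) * Fent P A z y)); last first.
  by move=> z hz; rewrite Fent_outl ?mulr0.
apply: eq_bigr => l _; rewrite !mxE /fundmx -(Fent_val (erefl (enum_val l)) Hj) //.
by rewrite -Hi (inj_eq enum_val_inj).
Qed.

Lemma fund_right (A : {set 'I_n}) x y :
  (1%:M - subTT P A) \in unitmx -> x \notin A -> y \notin A ->
  \sum_z Fent P A x z * ((z == y)%:R - P z y) = (x == y)%:R.
Proof.
move=> U hx hy; case: (ev_of hx) => i Hi; case: (ev_of hy) => j Hj.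
have := mulVmx U; move/matrixP => /(_ i j); rewrite !mxE.
have -> : (i == j) = (x == y) by rewrite -Hi -Hj (inj_eq enum_val_inj).
move=> <-.
rewrite -(sum_ev0 (A := A) (u := fun z => Fent P A x z * ((z == y)%:R - P z y))); last first.
  by move=> z hz; rewrite Fent_outr ?mul0r.
apply: eq_bigr => l _; rewrite !mxE /fundmx -(Fent_val Hi (erefl (enum_val l))) //.
by rewrite -Hj (inj_eq enum_val_inj).
Qed.

Lemma fund_eq (A : {set 'I_n}) (h : 'I_n -> 'I_n -> R) :
  (forall z y, z \in A -> h z y = 0) ->
  (forall x y, x \notin A -> y \notin A ->
     \sum_z ((x == z)%:R - P x z) * h z y = (x == y)%:R) ->
  forall x y, x \notin A -> y \notin A -> Fent P A x y = h x y.
Proof.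
move=> H0 H x y hx hy.
pose G : 'M[R]_(#|~: A|) := \matrix_(i, j) h (enum_val i) (enum_val j).
have E : (1%:M - subTT P A) *m G = 1%:M.
  apply/matrixP => i j; rewrite !mxE.
  have hi : enum_val i \notin A by have := enum_valP i; rewrite inE.
  have hj : enum_val j \notin A by have := enum_valP j; rewrite inE.
  rewrite -(inj_eq enum_val_inj) -(H _ _ hi hj).
  rewrite -(sum_ev0 (A := A) (u := fun z => ((enum_val i == z)%:R - P (enum_val i) z) * h z (enum_val j))); last first.
    by move=> z hz; rewrite H0 ?mulr0.
  apply: eq_bigr => l _; rewrite !mxE (inj_eq enum_val_inj) //.
have [U _] := mulmx1_unit E.
have EI : invmx (1%:M - subTT P A) = G.
  move: U E; set X := 1%:M - subTT P A => U E.
  by rewrite -[RHS]mul1mx -(mulVmx U) -mulmxA E mulmx1.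
case: (ev_of hx) => i Hi; case: (ev_of hy) => j Hj.
by rewrite (Fent_val Hi Hj) /fundmx EI mxE Hi Hj.
Qed.


Lemma kernel (S : {set 'I_n}) k (v : 'I_n -> R) :
  stochastic P -> k \in S -> (forall x, connect (step P) x k) ->
  (forall x, x \in S -> v x = 0) ->
  (forall x, x \notin S -> v x = \sum_y P x y * v y) -> forall x, v x = 0.
Proof.
move=> [Pge0 Psum] kS conn H0 H1.
pose M := \big[Order.max/0]_y `|v y|.
have leM y : `|v y| <= M by exact: (le_bigmax 0 (fun y => `|v y|)).
have [x0 _ Hx0] := @eq_bigmax _ _ _ 0 k predT (fun y => `|v y|) isT (fun y _ => normr_ge0 (v y)).
rewrite -/M in Hx0.
suff M0 : M = 0 by move=> x; apply/eqP; rewrite -normr_le0 -M0.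
apply/eqP; apply: contraT => MN0.
have st x y : `|v x| = M -> step P x y -> `|v y| = M.
  move=> hx sxy.
  have xS : x \notin S.
    by apply/negP => xS; move: MN0; rewrite -hx H0 // normr0 eqxx.
  have le1 : M <= \sum_y P x y * `|v y|.
    rewrite -hx H1 //; apply: le_trans (ler_norm_sum _ _ _) _.
    by apply: ler_sum => z _; rewrite normrM ger0_norm.
  have E0 : \sum_y P x y * (M - `|v y|) = 0.
    apply/eqP; rewrite eq_le; apply/andP; split.
      rewrite (eq_bigr (fun y => M * P x y - P x y * `|v y|)); last first.
        by move=> z _; rewrite mulrBr mulrC.
      by rewrite sumrB -mulr_sumr Psum mulr1 subr_le0.
    by apply: sumr_ge0 => z _; apply: mulr_ge0 => //; rewrite subr_ge0.
  have Hnn : forall z, true -> 0 <= P x z * (M - `|v z|).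
    by move=> z _; apply: mulr_ge0 => //; rewrite subr_ge0.
  have /eqP := (psumr_eq0P Hnn E0 (i:=y) isT).
  rewrite mulf_eq0 => /orP[/eqP Pxy|].
    by move: sxy; rewrite /step Pxy ltxx.
  by rewrite subr_eq0 => /eqP ->.
have : `|v k| = M.
  case/connectP: (conn x0) => p Hp Hl.
  elim: p x0 Hx0 Hp Hl => [|y p IH] x /= Hx; first by move=> _ ->.
  case/andP=> sxy Hp Hl; apply: (IH y) => //.
  by rewrite (st x y (esym Hx) sxy).
by move=> E; move: MN0; rewrite -E H0 // normr0 eqxx.
Qed.


Lemma sum_delta_l (x : 'I_n) (u : 'I_n -> R) : \sum_z (x == z)%:R * u z = u x.
Proof.
rewrite (bigD1 x) //= eqxx mul1r big1 ?addr0 // => z hz.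
by rewrite eq_sym (negbTE hz) mul0r.
Qed.

Lemma sum_delta_r (y : 'I_n) (u : 'I_n -> R) : \sum_z u z * (z == y)%:R = u y.
Proof.
rewrite (bigD1 y) //= eqxx mulr1 big1 ?addr0 // => z hz.
by rewrite (negbTE hz) mulr0.
Qed.

End H.

Theorem mainTheorem1 (R : realFieldType) (n : nat) (P : 'M[R]_n)
    (k s m t : 'I_n) :
  stochastic P ->
  P k k = 1 ->
  (forall x : 'I_n, connect (step P) x k) ->
  s != k -> m != k -> t != k -> s != t -> m != t ->
  0 < Fent P [set k] s t ->
  Favoid P t k s m =
    Fent P [set k] m t *
      (Fent P [set k] s m / Fent P [set k] s t
       - Fent P [set k] t m / Fent P [set k] t t).
Proof.
move=> HP Pkk conn sk mk tk st mt Fst.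
have [Pge0 Psum] := HP.
have nin1 x : x != k -> x \notin [set k] by rewrite in_set1.
have nin2 x : x != t -> x != k -> x \notin [set t; k].
  by move=> h1 h2; rewrite !inE negb_or h1 h2.
have U1 : (1%:M - subTT P [set k]) \in unitmx.
  apply: contraTT Fst => NU.
  case: (ev_of (nin1 _ sk)) => i Hi; case: (ev_of (nin1 _ tk)) => j Hj.
  rewrite (Fent_val P Hi Hj) /fundmx invmx_out // !mxE.
  have -> : (i == j) = false by rewrite -(inj_eq enum_val_inj) Hi Hj (negbTE st).
  by rewrite sub0r oppr_gt0 -leNgt Pge0.
have FL x y : x != k -> y != k ->
    \sum_z P x z * Fent P [set k] z y = Fent P [set k] x y - (x == y)%:R.
  move=> hx hy; have := fund_left U1 (nin1 _ hx) (nin1 _ hy).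
  rewrite (eq_bigr (fun z => (x == z)%:R * Fent P [set k] z y - P x z * Fent P [set k] z y)); last first.
    by move=> z _; rewrite mulrBl.
  rewrite sumrB sum_delta_l => <-; ring.
have FR x y : x != k -> y != k ->
    \sum_z Fent P [set k] x z * P z y = Fent P [set k] x y - (x == y)%:R.
  move=> hx hy; have := fund_right U1 (nin1 _ hx) (nin1 _ hy).
  rewrite (eq_bigr (fun z => Fent P [set k] x z * (z == y)%:R - Fent P [set k] x z * P z y)); last first.
    by move=> z _; rewrite mulrBr.
  rewrite sumrB sum_delta_r => <-; ring.
have Fk x : Fent P [set k] k x = 0 by rewrite Fent_outl // in_set1.
have Fk' x : Fent P [set k] x k = 0 by rewrite Fent_outr // in_set1.
have kin : k \in [set t; k] by rewrite !inE eqxx orbT.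
have ftt : Fent P [set k] t t != 0.
  apply/negP => /eqP f0.
  have := kernel (S := [set t; k]) (v := fun x => Fent P [set k] x t) HP kin conn.
  move=> /(_ _ _ s) E; move: Fst; rewrite E ?ltxx //.
    by move=> x; rewrite !inE => /orP[/eqP -> | /eqP ->]; [exact: f0 | exact: Fk].
  move=> x; rewrite !inE negb_or => /andP[hxt hxk].
  by rewrite FL // (negbTE hxt) subr0.
have fst0 : Fent P [set k] s t != 0 by rewrite gt_eqF.
pose h x y := Fent P [set k] x y
   - Fent P [set k] x t * Fent P [set k] t y / Fent P [set k] t t.
have hvan z y : z \in [set t; k] -> h z y = 0.
  rewrite !inE => /orP[/eqP -> | /eqP ->]; rewrite /h.
    by field.
  by rewrite !Fk mul0r mul0r subr0.
have hsum x y : x \notin [set t; k] -> y \notin [set t; k] ->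
    \sum_z ((x == z)%:R - P x z) * h z y = (x == y)%:R.
  rewrite !inE !negb_or => /andP[hxt hxk] /andP[hyt hyk].
  rewrite (eq_bigr (fun z => ((x == z)%:R - P x z) * Fent P [set k] z y
      - ((x == z)%:R - P x z) * Fent P [set k] z t *
        (Fent P [set k] t y / Fent P [set k] t t))); last first.
    by move=> z _; rewrite /h; ring.
  rewrite sumrB -mulr_suml.
  rewrite (fund_left U1 (nin1 _ hxk) (nin1 _ hyk)).
  rewrite (fund_left U1 (nin1 _ hxk) (nin1 _ tk)).
  by rewrite (negbTE hxt) mul0r subr0.
have geq x y : x \notin [set t; k] -> y \notin [set t; k] ->
    Fent P [set t; k] x y = h x y.
  exact: (fund_eq hvan hsum).
have Q x : x != t -> x != k ->
    Qabs P [set t; k] t x = Fent P [set k] x t / Fent P [set k] t t.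
  move=> hxt hxk; rewrite /Qabs (negbTE (nin2 _ hxt hxk)).
  rewrite (eq_bigr (fun y => h x y * P y t)); last first.
    by move=> y hy; rewrite geq // nin2.
  rewrite big_mkcond /=.
  rewrite (eq_bigr (fun y => Fent P [set k] x y * P y t
     - Fent P [set k] t y * P y t * (Fent P [set k] x t / Fent P [set k] t t))); last first.
    move=> y _; case: ifP => hy; first by rewrite /h; field.
    have hy' := negbFE hy.
    move: hy'; rewrite !inE => /orP[/eqP -> | /eqP ->]; rewrite /h.
      by field.
    by rewrite !Fk' !mul0r subr0.
  rewrite sumrB -mulr_suml (FR _ _ hxk tk) (FR _ _ tk tk) (negbTE hxt) eqxx.
  have -> : (true%:R : R) = 1 by []. by rewrite subr0; field.
rewrite /Favoid (geq _ _ (nin2 _ st sk) (nin2 _ mt mk)) (Q _ mt mk) (Q _ st sk) /h.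
by field; rewrite ftt fst0.
Qed.
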